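(* Let $k\ge2$ and suppose the initial candidate distribution $F_0$ on $[0,1]$ places probability mass $p$ at the point $1/2$. Then there is some $p^*_k<1$ such that if $p>p^*_k$, the candidate distribution converges under the replicator dynamics with left–right tie-breaking to a point mass at $1/2$ (i.e., the mass placed at $1/2$ by $F_{k,t}$ tends to $1$ as $t\to\infty$). Moreover, one of the fixed points of the map $p\mapsto p^k+kp^{k-1}(1-p)$ is such a $p^*_k$.
   Context: Voters form a continuum uniformly distributed on $[0,1]$, each voting for the nearest occupied point. The vote share allocated to an occupied point is the measure of voters whose nearest occupied point it is; it splits into a left part (voters to its left) and a right part (voters to its right). Left–right tie-breaking: if several candidates occupy the same point, one of them chosen uniformly at random receives the entire left part of that point's vote share and a different one chosen uniformly at random receives the entire right part; the others receive nothing. (A single candidate at a point receives both parts.) The plurality winner is the candidate with the largest vote share, ties broken uniformly at random. Replicator dynamics: given a probability distribution $F_0$ on $[0,1]$ and integer $k\ge2$, set $F_{k,0}=F_0$ and for $t\ge1$ let $F_{k,t}$ be the distribution of the position of the plurality winner among $k$ candidates whose positions are i.i.d. with distribution $F_{k,t-1}$. *)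

(* Defs.v *)
From HB Require Import structures.
From mathcomp Require Import all_boot all_order all_algebra.
From mathcomp Require Import all_classical all_reals all_analysis.
Set Implicit Arguments. Unset Strict Implicit. Unset Printing Implicit Defensive.
Import Order.TTheory GRing.Theory Num.Theory.
Import numFieldNormedType.Exports.
Local Open Scope classical_set_scope.
Local Open Scope ring_scope.

Section Voting.
Variables (R : realType) (k : nat).

Implicit Types (x : 'I_k -> R).

(* Left part of the vote share of the occupied point x i:
   voters in [0, x i] if no occupied point lies to its left,
   otherwise half the gap to the nearest occupied point on the left. *)
Definition left_part x (i : 'I_k) : R :=
  match [pick j | x j < x i] with
  | Some j0 => (x i - \big[Num.max/x j0]_(j | x j < x i) x j) / 2
  | None => x i
  end.

(* Right part: voters in [x i, 1] if no occupied point lies to its right,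
   otherwise half the gap to the nearest occupied point on the right. *)
Definition right_part x (i : 'I_k) : R :=
  match [pick j | x i < x j] with
  | Some j0 => (\big[Num.min/x j0]_(j | x i < x j) x j - x i) / 2
  | None => 1 - x i
  end.

Definition mult x (i : 'I_k) : nat := #|[set j | x j == x i]|.

(* A tie-breaking outcome (sg, tu): sg i (resp. tu i) is the candidate that
   receives the left (resp. right) part of the point x i.  The uniform
   distribution on valid outcomes is the product over occupied points of
   the uniform distribution on ordered pairs of distinct candidates there. *)
Definition valid_tb x (st : {ffun 'I_k -> 'I_k} * {ffun 'I_k -> 'I_k}) : bool :=
  [forall i, [&& x (st.1 i) == x i, x (st.2 i) == x i &
                 (1 < mult x i)%N ==> (st.1 i != st.2 i)]] &&
  [forall i, forall j, (x i == x j) ==> (st.1 i == st.1 j) && (st.2 i == st.2 j)].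

Definition valid_set x := [set st | valid_tb x st].

Definition share x (st : {ffun 'I_k -> 'I_k} * {ffun 'I_k -> 'I_k}) (j : 'I_k) : R :=
  (if st.1 j == j then left_part x j else 0) +
  (if st.2 j == j then right_part x j else 0).

Definition plur_win (v : 'I_k -> R) (i : 'I_k) : R :=
  if [forall j, v j <= v i] then (#|[set j | v j == v i]|%:R)^-1 else 0.

Definition win_prob x (i : 'I_k) : R :=
  (#|valid_set x|%:R)^-1 * \sum_(st in valid_set x) plur_win (share x st) i.

End Voting.

Fixpoint iint {R : realType} (P : probability R R) (n : nat)
  (g : seq R -> \bar R) : \bar R :=
  match n with
  | 0 => g [::]
  | n'.+1 => (\int[P]_y iint P n' (fun s => g (y :: s)))%E
  end.

Definition winner_law {R : realType} (k : nat) (P : probability R R)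
  (A : set R) : \bar R :=
  iint P k (fun s => (\sum_(i < k)
       win_prob (fun j : 'I_k => nth 0 s j) i * \1_A (nth 0 s i))%:E).

Definition phi {R : realType} (k : nat) (p : R) : R :=
  p ^+ k + k%:R * p ^+ k.-1 * (1 - p).

(* Main.v *)
Require Import Defs.
From HB Require Import structures.
From mathcomp Require Import all_boot all_order all_algebra.
From mathcomp Require Import all_classical all_reals all_analysis.
From mathcomp Require Import lra ring measurable_realfun.
Import Order.TTheory GRing.Theory Num.Theory.
Import numFieldNormedType.Exports.
Local Open Scope classical_set_scope.
Local Open Scope ring_scope.

Module Helpers.
Set Implicit Arguments. Unset Strict Implicit. Unset Printing Implicit Defensive.


Section Comb.
Variables (R : realType) (k : nat).
Implicit Types (x : 'I_k -> R).

Lemma sum_plur (v : 'I_k -> R) (i0 : 'I_k) : \sum_i plur_win v i = 1.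
Proof.
have [M _ hm'] := @arg_maxP _ R _ i0 xpredT v isT.
have hm : forall j, v j <= v M by move=> j; exact: hm'.
have claim : forall i, plur_win v i =
   if v i == v M then (#|[set j | v j == v M]|%:R)^-1 else 0.
  move=> i; rewrite /plur_win; case: ifP => [/forallP h | /negbT hn].
    have e : v i = v M by apply/eqP; rewrite eq_le h /= hm.
    by rewrite e eqxx.
  case: eqP => e //; exfalso; move/negP: hn; apply; apply/forallP => j.
  by rewrite e; apply: hm.
rewrite (eq_bigr _ (fun i _ => claim i)) -big_mkcond /=.
rewrite (eq_bigl (fun i => i \in [set j | v j == v M])); last first.
  by move=> i; apply/idP/idP => h; [apply: mem_set; exact: h | move/set_mem: h].
rewrite sumr_const.
set A := [set j | v j == v M].
rewrite (@eq_card _ _ (mem A)) //.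
rewrite -[LHS]mulr_natr mulVf // pnatr_eq0 -lt0n.
apply/card_gt0P; exists M; change (M \in A); apply: mem_set; exact: eqxx.
Qed.

Definition s1f x := [ffun i => if [pick j | x j == x i] is Some j then j else i].
Definition s2f x := [ffun i => if [pick j | (x j == x i) && (j != s1f x i)] is Some j
   then j else s1f x i].

Lemma s1fE x i : s1f x i = if [pick j | x j == x i] is Some j then j else i.
Proof. by rewrite ffunE. Qed.
Lemma s2fE x i : s2f x i = if [pick j | (x j == x i) && (j != s1f x i)] is Some j
   then j else s1f x i.
Proof. by rewrite /s2f ffunE. Qed.

Lemma valid_nonempty x : (s1f x, s2f x) \in valid_set x.
Proof.
rewrite /valid_set; apply: mem_set; rewrite /valid_tb; apply/andP; split; apply/forallP => i /=.
  have h1 : x (s1f x i) == x i.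
    by rewrite s1fE; case: pickP => [j -> | _] //.
  have h2 : x (s2f x i) == x i.
    by rewrite s2fE; case: pickP => [j /andP[-> _] | _] //.
  rewrite h1 h2 /=; apply/implyP => hm.
  rewrite s2fE; case: pickP => [j /andP[_ hj] | hn]; first by rewrite eq_sym.
  exfalso.
  move: hm; rewrite /mult; case/card_gt1P => y [z [hy hz yz]].
  have hy' : x y == x i by move: hy => /set_mem.
  have hz' : x z == x i by move: hz => /set_mem.
  case: (eqVneq y (s1f x i)) => [ey | ny].
    by move: (hn z); rewrite hz' /= -ey eq_sym yz.
  by move: (hn y); rewrite hy' ny.
apply/forallP => j; apply/implyP => /eqP e.
have E1 : s1f x i = s1f x j.
  rewrite !s1fE e; case: pickP => // hn.
  by move: (hn j); rewrite eqxx.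
by rewrite !s2fE E1 e !eqxx.
Qed.

Lemma sum_win x (i0 : 'I_k) : \sum_i win_prob x i = 1.
Proof.
rewrite /win_prob -mulr_sumr exchange_big /=.
rewrite (eq_bigr _ (fun st _ => sum_plur (share x st) i0)) sumr_const.
rewrite (@eq_card _ _ (mem (valid_set x))) // mulVf // pnatr_eq0 -lt0n.
by apply/card_gt0P; exists (s1f x, s2f x); apply: valid_nonempty.
Qed.

Lemma left_ge0 x i : 0 <= x i -> 0 <= left_part x i.
Proof.
move=> h; rewrite /left_part; case: pickP => [j0 hj0 | _] //.
apply: divr_ge0 => //; rewrite subr_ge0.
apply: (big_ind (fun y => y <= x i)) => //; first exact: ltW.
  by move=> a b ha hb; rewrite ge_max ha hb.
by move=> j hj; exact: ltW.
Qed.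

Lemma right_ge0 x i : x i <= 1 -> 0 <= right_part x i.
Proof.
move=> h; rewrite /right_part; case: pickP => [j0 hj0 | _]; last by rewrite subr_ge0.
apply: divr_ge0 => //; rewrite subr_ge0.
apply: (big_ind (fun y => x i <= y)) => //; first exact: ltW.
  by move=> a b ha hb; rewrite le_min ha hb.
by move=> j hj; exact: ltW.
Qed.

Lemma win_prob_nonc x i0 j1 : j1 != i0 -> x i0 != 2^-1 ->
  (forall j, j != i0 -> x j = 2^-1) -> win_prob x i0 = 0.
Proof.
move=> hj1 hi0 hc.
set c : R := 2^-1 in hi0 hc.
have only : forall j, x j == x i0 -> j = i0.
  move=> j; case: (eqVneq j i0) => // /hc -> /eqP ci.
  by move: hi0; rewrite -ci eqxx.
rewrite /win_prob big1 ?mulr0 // => st; rewrite inE => /andP[/forallP h1 /forallP h2].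
have si1 : st.1 i0 = i0 by apply: only; case/and3P: (h1 i0).
have si2 : st.2 i0 = i0 by apply: only; case/and3P: (h1 i0).
have xj1 : x j1 = c by apply: hc.
rewrite /plur_win; case: ifP => // /forallP hall; exfalso.
set a := x i0 in hi0 only.
have xother : forall j, j != i0 -> x j = c by [].
have [alc | cla] : a < c \/ c < a.
  by case: (ltgtP a c) => h; [left | right | move: hi0; rewrite h eqxx].
- set j0 := st.2 j1.
  have xj0 : x j0 = c by case/and3P: (h1 j1) => _ /eqP -> _.
  have s2j0 : st.2 j0 = j0.
    by move/forallP: (h2 j0) => /(_ j1); rewrite xj0 xj1 eqxx /= => /andP[_ /eqP].
  have li0 : left_part x i0 = a.
    rewrite /left_part; case: pickP => [j hj | _] //; exfalso.
    case: (eqVneq j i0) => [e | ne]; first by move: hj; rewrite e ltxx.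
    by move: hj; rewrite (hc _ ne) -/a => /(lt_trans alc); rewrite ltxx.
  have ri0 : right_part x i0 = (c - a) / 2.
    rewrite /right_part; case: pickP => [j hj | hn]; last first.
      by move: (hn j1); rewrite xj1 -/a alc.
    have F : forall j, x i0 < x j -> x j = c.
      move=> j' h; case: (eqVneq j' i0) => [e | ne]; first by move: h; rewrite e ltxx.
      exact: hc.
    congr (_ / 2); congr (_ - _).
    by apply: (big_ind (fun y => y = c)) => //; [exact: F | move=> u w -> ->; rewrite minxx].
  have rj0 : right_part x j0 = 1 - c.
    rewrite /right_part; case: pickP => [j hj | _]; last by rewrite xj0.
    exfalso; case: (eqVneq j i0) => [e | ne].
      by move: hj; rewrite e xj0 -/a => /(lt_trans alc); rewrite ltxx.
    by move: hj; rewrite xj0 (hc _ ne) ltxx.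
  have lj0 : 0 <= left_part x j0 by apply: left_ge0; rewrite xj0 /c; lra.
  move: (hall j0); rewrite /share si1 si2 s2j0 !eqxx li0 ri0 rj0.
  have : 0 <= (if st.1 j0 == j0 then left_part x j0 else 0) by case: ifP.
  move: alc; rewrite /c; clearbody a; move: (if _ then _ else _) => L; move: L; clear -a; move: a => a L H1 H2 H3; lra.
- set j0 := st.1 j1.
  have xj0 : x j0 = c by case/and3P: (h1 j1) => /eqP -> _ _.
  have s1j0 : st.1 j0 = j0.
    by move/forallP: (h2 j0) => /(_ j1); rewrite xj0 xj1 eqxx /= => /andP[/eqP].
  have ri0 : right_part x i0 = 1 - a.
    rewrite /right_part; case: pickP => [j hj | _] //; exfalso.
    case: (eqVneq j i0) => [e | ne]; first by move: hj; rewrite e ltxx.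
    by move: hj; rewrite (hc _ ne) -/a => /(lt_trans cla); rewrite ltxx.
  have li0 : left_part x i0 = (a - c) / 2.
    rewrite /left_part; case: pickP => [j hj | hn]; last first.
      by move: (hn j1); rewrite xj1 -/a cla.
    have F : forall j, x j < x i0 -> x j = c.
      move=> j' h; case: (eqVneq j' i0) => [e | ne]; first by move: h; rewrite e ltxx.
      exact: hc.
    congr (_ / 2); congr (_ - _).
    by apply: (big_ind (fun y => y = c)) => //; [exact: F | move=> u w -> ->; rewrite maxxx].
  have lj0 : left_part x j0 = c.
    rewrite /left_part; case: pickP => [j hj | _]; last by rewrite xj0.
    exfalso; case: (eqVneq j i0) => [e | ne].
      by move: hj; rewrite e xj0 -/a => /(lt_trans cla); rewrite ltxx.
    by move: hj; rewrite xj0 (hc _ ne) ltxx.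
  have rj0 : 0 <= right_part x j0 by apply: right_ge0; rewrite xj0 /c; lra.
  move: (hall j0); rewrite /share si1 si2 s1j0 !eqxx li0 ri0 lj0.
  have : 0 <= (if st.2 j0 == j0 then right_part x j0 else 0) by case: ifP.
  move: cla; rewrite /c; clearbody a; move: (if _ then _ else _) => L; move: L; clear -a; move: a => a L H1 H2 H3; lra.
Qed.

Lemma key_sum x : (1 < k)%N ->
  (forall i j, x i != 2^-1 -> x j != 2^-1 -> i = j) ->
  \sum_i win_prob x i * \1_[set 2^-1] (x i) = 1.
Proof.
move=> hk hx.
have k0 : (0 < k)%N by apply: ltnW.
rewrite -[RHS](sum_win x (Ordinal k0)); apply: eq_bigr => i _.
case: (eqVneq (x i) 2^-1) => h.
  by rewrite h indicE mem_set ?mulr1.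
pose j1 : 'I_k := if val i == 0%N then Ordinal hk else Ordinal k0.
have hj1 : j1 != i.
  apply/eqP => e; move: (congr1 val e); rewrite /j1.
  by case: eqP => /= [-> | ne] // /esym.
rewrite (win_prob_nonc hj1 h) ?mul0r // => j hj.
by apply/eqP; apply: contraNT hj => /(hx _ _ ^~ h) ->.
Qed.

End Comb.


Section Iint.
Variables (R : realType) (P : probability R R).

Lemma eq_iint n (g g' : seq R -> \bar R) : (forall s, g s = g' s) ->
  iint P n g = iint P n g'.
Proof. by move/funext => ->. Qed.

Lemma iint_ge0 n (g : seq R -> \bar R) : (forall s, 0 <= g s)%E -> (0 <= iint P n g)%E.
Proof.
elim: n g => [|n IH] g hg /=; first exact: hg.
by apply: integral_ge0 => y _; apply: IH => s; exact: hg.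
Qed.

Lemma iint_le n (g g' : seq R -> \bar R) : (forall s, 0 <= g s)%E ->
  (forall s, 0 <= g' s)%E -> (forall s, size s = n -> g s <= g' s)%E ->
  (iint P n g <= iint P n g')%E.
Proof.
elim: n g g' => [|n IH] g g' h0 h0' hle /=; first exact: hle.
rewrite !ge0_integralTE; try by move=> y; apply: iint_ge0.
apply: ereal_sup_le => _ [h hh <-]; exists h => //= y.
apply: le_trans (hh y) _; apply: IH => // s hs; by apply: hle; rewrite /= hs.
Qed.

Lemma iint_cst n (r : R) : iint P n (fun _ => r%:E) = r%:E.
Proof.
elim: n => [|n IH] //=; rewrite IH.
rewrite (integral_cst P measurableT (r%:E)).
transitivity (r%:E * 1)%E; last by rewrite mule1.
by congr (_ * _)%E; apply: probability_setT.
Qed.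

Variable c : R.
Let q := fine (P [set c]).

Lemma Pc : P [set c] = q%:E.
Proof.
rewrite /q fineK // ge0_fin_numE //.
by apply: (le_lt_trans (probability_le1 P (measurable_set1 c))); rewrite ltry.
Qed.

Lemma q01 : 0 <= q <= 1.
Proof.
have h1 := probability_le1 P (measurable_set1 c).
have h0 : (0 <= P [set c])%E by [].
by rewrite Pc !lee_fin in h0 h1; rewrite h0 h1.
Qed.

Lemma integral_two (A B : R) : 0 <= A -> 0 <= B ->
  (\int[P]_y (if y == c then A else B)%:E = (A * q + B * (1 - q))%:E)%E.
Proof.
move=> A0 B0.
have -> : (fun y => (if y == c then A else B)%:E) =
   (fun y => (A * \1_[set c] y)%:E + (B * \1_(~` [set c]) y)%:E)%E.
  apply: funext => y; rewrite !indicE.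
  case: (eqVneq y c) => [-> | ne].
    rewrite (_ : c \in [set c] = true); last by apply: mem_set.
    rewrite (_ : c \in ~` [set c] = false); last first.
      by apply: negbTE; apply/negP => /set_mem /(_ erefl).
    by rewrite mulr1 mulr0 adde0.
  rewrite (_ : y \in [set c] = false); last first.
    by apply: negbTE; apply/negP => /set_mem /= e; move: ne; rewrite e eqxx.
  rewrite (_ : y \in ~` [set c] = true); last first.
    by apply: mem_set => /= e; move: ne; rewrite e eqxx.
  by rewrite mulr1 mulr0 add0e.
rewrite ge0_integralD //; first last.
- apply/measurable_EFinP; apply: measurable_funM => //.
  apply: measurable_indic; apply: measurableC; exact: measurable_set1.
- by move=> y _; rewrite lee_fin mulr_ge0.
- apply/measurable_EFinP; apply: measurable_funM => //.
- by move=> y _; rewrite lee_fin mulr_ge0.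
rewrite (integralZl_indic _ (fun _ => [set c])) //; last first.
  by move=> h; move: A0; rewrite leNgt h.
rewrite (integralZl_indic _ (fun _ => ~` [set c])) //; first last.
- by apply: measurableC; exact: measurable_set1.
- by move=> h; move: B0; rewrite leNgt h.
rewrite !integral_indic //; last by apply: measurableC; exact: measurable_set1.
rewrite !setIT.
have hC : P [set~ c] = (1 - q)%:E.
  rewrite probability_setC; last exact: measurable_set1.
  by rewrite Pc.
transitivity (A%:E * q%:E + B%:E * (1 - q)%:E)%E.
  by congr (_ * _ + _ * _)%E; [apply: Pc | apply: hC].
by rewrite -!EFinM -EFinD.
Qed.

Definition G0 (s : seq R) : \bar R :=
  ((if (count (fun y => y != c) s <= 0)%N then 1 else 0 : R))%:E.
Definition G1 (s : seq R) : \bar R :=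
  ((if (count (fun y => y != c) s <= 1)%N then 1 else 0 : R))%:E.

Lemma iint_G0 n : iint P n G0 = (q ^+ n)%:E.
Proof.
elim: n => [|n IH] /=; first by rewrite /G0 /= expr0.
have -> : (fun y => iint P n (fun s => G0 (y :: s))) =
   (fun y => (if y == c then q ^+ n else 0)%:E).
  apply: funext => y; case: eqP => [-> | ne].
    by rewrite -IH; apply: eq_iint => s; rewrite /G0 /= eqxx add0n.
  rewrite -(iint_cst n 0); apply: eq_iint => s; rewrite /G0 /=.
  by move/eqP: ne => ->.
have [q0 q1] := andP q01.
by rewrite integral_two ?exprn_ge0 // mul0r addr0 exprSr.
Qed.

Lemma iint_G1 n : iint P n G1 = (q ^+ n + n%:R * q ^+ n.-1 * (1 - q))%:E.
Proof.
elim: n => [|n IH] /=; first by rewrite /G1 /= expr0 (_ : 0%:R = 0 :> R) // !mul0r addr0.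
have -> : (fun y => iint P n (fun s => G1 (y :: s))) =
   (fun y => (if y == c then q ^+ n + n%:R * q ^+ n.-1 * (1 - q) else q ^+ n)%:E).
  apply: funext => y; case: eqP => [-> | ne].
    by rewrite -IH; apply: eq_iint => s; rewrite /G1 /= eqxx add0n.
  rewrite -iint_G0; apply: eq_iint => s; rewrite /G1 /G0 /=.
  by move/eqP: ne => ->.
have [q0 q1] := andP q01.
have b0 : 0 <= q ^+ n + n%:R * q ^+ n.-1 * (1 - q).
  by have := iint_ge0 n (g := G1) (fun s => ltac:(rewrite /G1; case: ifP => _; rewrite lee_fin //)); rewrite IH lee_fin.
rewrite integral_two ?exprn_ge0 //; congr (_%:E).
case: n {IH b0} => [|n] /=; first by rewrite !expr0; ring.
rewrite !exprS -!natr1; ring.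
Qed.

End Iint.

Lemma count2 (T : Type) (x0 : T) (a : pred T) (s : seq T) i j : (i < j < size s)%N ->
  a (nth x0 s i) -> a (nth x0 s j) -> (2 <= count a s)%N.
Proof.
elim: s i j => [|y s IH] i j /=; first by case/andP => ij; rewrite ltn0.
case: i => [|i]; case: j => [|j] //.
  rewrite /= => js ai aj.
  rewrite ai /= add1n ltnS -has_count; apply/(has_nthP x0); exists j => //.
move=> /= /andP[ij js] ai aj.
have := IH i j; rewrite -ltnS ij -ltnS js => /(_ isT ai aj) h.
by apply: leq_trans h _; rewrite leq_addl.
Qed.


Lemma plur_win_ge0 (R : realType) k (v : 'I_k -> R) i : 0 <= plur_win v i.
Proof. by rewrite /plur_win; case: ifP => // _; rewrite invr_ge0 ler0n. Qed.

Lemma win_prob_ge0 (R : realType) k (x : 'I_k -> R) i : 0 <= win_prob x i.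
Proof.
rewrite /win_prob; apply: mulr_ge0; first by rewrite invr_ge0 ler0n.
by apply: sumr_ge0 => st _; apply: plur_win_ge0.
Qed.

Lemma winner_ge (R : realType) k (hk : (1 < k)%N) (P : probability R R) :
  ((phi k (fine (P [set (2^-1 : R)%R])))%:E <= winner_law k P [set (2^-1 : R)%R])%E.
Proof.
rewrite /phi -(iint_G1 P (2^-1) k) /winner_law.
apply: iint_le.
- by move=> s; rewrite /G1; case: ifP => _; rewrite lee_fin.
- move=> s; rewrite lee_fin; apply: sumr_ge0 => i _; apply: mulr_ge0.
    exact: win_prob_ge0.
  by rewrite indicE ler0n.
move=> s hs; rewrite /G1; case: ifP => h; last first.
  rewrite lee_fin; apply: sumr_ge0 => i _; apply: mulr_ge0.
    exact: win_prob_ge0.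
  by rewrite indicE ler0n.
have hx : forall i j : 'I_k, nth 0 s i != 2^-1 -> nth 0 s j != 2^-1 -> i = j.
  move=> i j hi hj; apply/eqP; apply: contraTT h => ne; rewrite -ltnNge.
  case: (ltngtP i j) => hij.
  - by apply: (@count2 R 0 (fun y => y != 2^-1) s i j) => //; rewrite hij hs ltn_ord.
  - by apply: (@count2 R 0 (fun y => y != 2^-1) s j i) => //; rewrite hij hs ltn_ord.
  - by move: ne; rewrite (val_inj hij) eqxx.
have := key_sum (x := fun j : 'I_k => nth 0 s j) hk hx; move=> /= ->.
by rewrite lee_fin.
Qed.


Section Ana.
Variables (R : realType) (n : nat).

Definition vf (p : R) := n.+1%:R * p ^+ n - \sum_(j < n) p ^+ j.
Definition zf (p : R) := n.+1%:R - \sum_(j < n) (p ^+ (n - j))^-1.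
Definition vpoly : {poly R} := n.+1%:R *: 'X^n - \sum_(j < n) 'X^j.

Lemma vpolyE p : vpoly.[p] = vf p.
Proof. by rewrite /vpoly /vf hornerD hornerN hornerZ hornerXn horner_sum; under eq_bigr do rewrite hornerXn. Qed.

Lemma geom (p : R) m : (1 - p) * \sum_(j < m) p ^+ j = 1 - p ^+ m.
Proof.
elim: m => [|m IH]; first by rewrite big_ord0 mulr0 expr0 subrr.
by rewrite big_ord_recr /= mulrDr IH exprSr; ring.
Qed.

Lemma phi_id p : phi n.+2 p - p = p * (1 - p) * vf p.
Proof.
have hS := geom p n.
have -> : p * (1 - p) * vf p =
   p * (1 - p) * (n.+1%:R * p ^+ n) - p * ((1 - p) * \sum_(j < n) p ^+ j).
  by rewrite /vf; ring.
rewrite hS /phi /= -!natr1 !exprS; ring.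
Qed.

Lemma one_phi p : 1 - phi n.+2 p = (1 - p) * (1 - p * vf p).
Proof.
have := phi_id p; move=> h.
have -> : 1 - phi n.+2 p = (1 - p) - (phi n.+2 p - p) by ring.
by rewrite h; ring.
Qed.

Lemma vf_zf p : 0 < p -> vf p = p ^+ n * zf p.
Proof.
move=> p0; rewrite /vf /zf mulrBr mulr_sumr; congr (_ - _); first by ring.
apply: eq_bigr => j _.
have e : p ^+ n = p ^+ j * p ^+ (n - j) by rewrite -exprD subnKC // ltnW.
by rewrite e mulfK // expf_neq0 // gt_eqF.
Qed.

Lemma zf_le a b : 0 < a -> a <= b -> zf a <= zf b.
Proof.
move=> a0 ab; rewrite /zf lerD2l lerN2; apply: ler_sum => j _.
have b0 : 0 < b by apply: lt_le_trans ab.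
rewrite lef_pV2 ?posrE ?exprn_gt0 //.
by rewrite lerXn2r // ?nnegrE ltW.
Qed.

Lemma zf_lt a b : (0 < n)%N -> 0 < a -> a < b -> zf a < zf b.
Proof.
move=> n0 a0 ab; rewrite /zf ltrD2l ltrN2.
case: n n0 => // m _; rewrite !big_ord_recl /=.
apply: ltr_leD.
  have b0 : 0 < b by apply: lt_trans ab.
  rewrite ltf_pV2 ?posrE ?exprn_gt0 // subn0.
  by rewrite ltrXn2r // ltW.
apply: ler_sum => j _.
have b0 : 0 < b by apply: lt_trans ab.
rewrite lef_pV2 ?posrE ?exprn_gt0 //.
by rewrite lerXn2r // ?nnegrE ltW.
Qed.

Lemma fixed_point : exists c : R, [/\ 0 <= c, c < 1, phi n.+2 c = c &
  forall p0, c < p0 -> exists2 d, 0 < d & forall p, p0 <= p -> d <= p * vf p].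
Proof.
case: (posnP n) => [n0 | n0].
  exists 0; split => //.
    by rewrite /phi !expr0n /=; ring.
  move=> p0 hp0; exists p0 => // p hp.
  by rewrite /vf n0 big_ord0 expr0 subr0 mulr1 mulr1.
have hv0 : vpoly.[0] = -1.
  rewrite vpolyE /vf expr0n (gtn_eqF n0) mulr0 sub0r.
  case: n n0 => // m _; rewrite big_ord_recl /= expr0 big1 ?addr0 // => j _.
  by rewrite expr0n.
have hv1 : vpoly.[1] = 1.
  rewrite vpolyE /vf expr1n mulr1 (eq_bigr (fun _ => 1)) => [|j _]; last by rewrite expr1n.
  by rewrite sumr_const card_ord -natr1 addrAC subrr add0r.
have [c hc vc] : exists2 c, c \in `[(0:R), 1] & vpoly.[c] = 0.
  apply: IVT => //.
    by apply: continuous_subspaceT; apply: continuous_horner.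
  rewrite hv0 hv1; apply/andP; split; [rewrite ge_min; apply/orP; left | rewrite le_max; apply/orP; right]; lra.
move: hc; rewrite in_itv /= => /andP[c0 c1].
have cne0 : c != 0 by apply/eqP => e; move: vc; rewrite e hv0; lra.
have cne1 : c != 1 by apply/eqP => e; move: vc; rewrite e hv1; lra.
have cpos : 0 < c by rewrite lt_def cne0.
have zc : zf c = 0.
  move: vc; rewrite vpolyE vf_zf // => /eqP; rewrite mulf_eq0 expf_eq0 (negbTE cne0) andbF /=.
  by move/eqP.
exists c; split => //.
- by rewrite lt_def eq_sym cne1.
- by apply/eqP; rewrite -subr_eq0 phi_id -vpolyE vc mulr0.
move=> p0 hp0.
have p0pos : 0 < p0 by apply: lt_trans hp0.
have zp0 : 0 < zf p0 by rewrite -zc; apply: zf_lt.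
exists (p0 ^+ n.+1 * zf p0); first by rewrite mulr_gt0 // exprn_gt0.
move=> p hp.
have ppos : 0 < p by apply: lt_le_trans hp.
rewrite vf_zf // mulrA -exprS.
apply: ler_pM.
- by rewrite exprn_ge0 // ltW.
- exact: ltW.
- by rewrite lerXn2r // ?nnegrE ltW.
- exact: zf_le.
Qed.

End Ana.

End Helpers.
Import Helpers.
Unset Implicit Arguments.

Theorem mainTheorem18 (R : realType) (k : nat) (hk : (2 <= k)%N) :
  exists pstar : R,
    pstar < 1 /\ phi k pstar = pstar /\
    forall (p : R) (F : nat -> probability R R),
      F 0%N `[0%R, 1%R]%classic = 1%E ->
      F 0%N [set 2^-1] = p%:E ->
      pstar < p ->
      (forall (t : nat) (A : set R), measurable A ->
          F t.+1 A = winner_law k (F t) A) ->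
      (fun t => F t [set 2^-1]) @ \oo --> 1%E.
Proof.
have [n ek] : exists n, k = n.+2 by exists (k - 2)%N; rewrite -addn2 subnK.
subst k.
have [c [c0 c1 hphi hd]] := fixed_point R n.
exists c; split => //; split => // p F _ hF0 hcp hF.
pose q t := fine (F t [set (2^-1 : R)]).
have hPc t : F t [set (2^-1 : R)] = (q t)%:E by apply: Pc.
have hq01 t : 0 <= q t <= 1 by apply: q01.
have hstep t : phi n.+2 (q t) <= q t.+1.
  have h := winner_ge (isT : (1 < n.+2)%N) (F t).
  rewrite -hF in h; last exact: measurable_set1.
  by move: h; rewrite (hPc t.+1) lee_fin.
have hq0 : q 0%N = p by rewrite /q hF0.
have [d d0 hdv] := hd p hcp.
set m := Num.min d 1.
have m0 : 0 < m by rewrite lt_min d0 ltr01.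
have md : m <= d by rewrite ge_min lexx.
have m1 : m <= 1 by rewrite ge_min lexx orbT.
set r := 1 - m.
have r0 : 0 <= r by rewrite subr_ge0.
have r1 : r < 1 by rewrite /r; lra.
have claim : forall t, p <= q t /\ 1 - q t <= r ^+ t * (1 - p).
  elim => [|t [hpq hb]]; first by rewrite hq0 expr0 mul1r lexx.
  have hv := hdv (q t) hpq.
  have hs := hstep t.
  have ho := one_phi n (q t).
  have [qa qb] := andP (hq01 t).
  have q1 : 0 <= 1 - q t by rewrite subr_ge0.
  have e1 : (1 - q t) * (1 - q t * vf n (q t)) <= (1 - q t) * r.
    by apply: ler_wpM2l => //; rewrite /r; lra.
  have e2 : (1 - q t) * r <= r ^+ t * (1 - p) * r by apply: ler_wpM2r.
  have e3 : (1 - q t) * (1 - q t * vf n (q t)) <= (1 - q t).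
    by rewrite -[leRHS]mulr1; apply: ler_wpM2l => //; lra.
  split.
    by move: hs ho e3 hpq; set P := phi _ _; set Y := _ * _; lra.
  rewrite exprSr -mulrA (mulrC r) mulrA.
  by move: hs ho e1 e2; set P := phi _ _; set Y := (1 - q t) * (1 - _); set Z := (1 - q t) * r; set W := _ * r; lra.
apply: cvg_EFin.
  by apply: nearW => t; rewrite hPc.
apply: (@squeeze_cvgr _ _ _ _ (fun t => 1 - r ^+ t * (1 - p)) (fun _ => 1)).
- apply: nearW => t /=.
  have [h1 h2] := claim t.
  have [qa qb] := andP (hq01 t).
  rewrite -/(q t); apply/andP; split => //; lra.
- have h : (fun t => 1 - r ^+ t * (1 - p)) @ \oo --> (1 - 0 * (1 - p) : R).
    have h2 : (fun t => r ^+ t * (1 - p)) @ \oo --> (0 * (1 - p) : R).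
      apply: (@cvgMr_tmp _ _ _ _ (fun t => r ^+ t)); apply: cvg_expr.
      by rewrite ger0_norm.
    have h3 := cvgB (cvg_cst (1:R)) h2.
    exact: h3.
  by rewrite mul0r subr0 in h.
- exact: cvg_cst.
Qed.
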